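(* Each of $\mathtt{CA}$, $\mathtt{SUR}$ and $\mathtt{REV}$, with the topology induced by the metric $\delta$, is a perfect space, i.e. has no isolated points.
   Context: $\Sigma$ is a finite alphabet with $|\Sigma|\ge2$, $N(r)=[-r,r]$. A cellular automaton (CA) is a map $c:\Sigma^\mathbb{Z}\to\Sigma^\mathbb{Z}$ of the form $c(x)_i=F(x_{[i-r,i+r]})$ for a local function $F:\Sigma^{N(r)}\to\Sigma$. $\mathtt{CA}$ is the set of all CA, $\mathtt{SUR}$ the surjective and $\mathtt{REV}$ the injective ones. For $c,d\in\mathtt{CA}$ with common radius $r$, $D^c_d$ is the set of $w\in\Sigma^{N(r)}$ on which the local rules of $c$ and $d$ give different outputs, and $\delta(c,d)=|D^c_d|/|\Sigma|^{2r+1}$ (independent of $r$). *)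

(* Defs.v *)
From Stdlib Require Import ClassicalEpsilon.
From HB Require Import structures.
From mathcomp Require Import all_boot all_order all_algebra.
Set Implicit Arguments. Unset Strict Implicit. Unset Printing Implicit Defensive.
Import Order.TTheory GRing.Theory Num.Theory.

(* Configurations over the alphabet S : finType are maps int -> S (S^Z).
   A word on the neighbourhood N(r) = [-r, r] is a finite function on
   'I_(2r+1); index k stands for position k - r. *)
Definition config (S : finType) := int -> S.
Definition word (S : finType) (r : nat) := {ffun 'I_(r.*2.+1) -> S}.

Definition window (S : finType) (r : nat) (x : config S) (i : int) : word S r :=
  [ffun k : 'I_(r.*2.+1) => x (i - Posz r + Posz (k : nat))%R].

Definition has_radius (S : finType) (r : nat) (c : config S -> config S) : Prop :=
  exists F : word S r -> S, forall (x : config S) (i : int), c x i = F (window r x i).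

Definition isCA (S : finType) (c : config S -> config S) : Prop :=
  exists r : nat, has_radius r c.
Definition isSUR (S : finType) (c : config S -> config S) : Prop :=
  isCA c /\ (forall y : config S, exists x, c x = y).
Definition isREV (S : finType) (c : config S -> config S) : Prop :=
  isCA c /\ (forall x y : config S, c x = c y -> x = y).

Definition extend (S : finType) (r : nat) (w : word S r) : config S :=
  fun j => if ((0 <= j + Posz r)%R && (j + Posz r < Posz r.*2.+1)%R)
           then w (inord (absz (j + Posz r)%R)) else w ord0.

(* Local rule of c at radius r (meaningful when c has radius r). *)
Definition local_rule (S : finType) (r : nat) (c : config S -> config S)
  (w : word S r) : S := c (extend w) 0%R.

Definition Dset (S : finType) (r : nat) (c d : config S -> config S) : {set word S r} :=
  [set w : word S r | local_rule c w != local_rule d w].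

Definition delta_at (S : finType) (r : nat) (c d : config S -> config S) : rat :=
  (#|Dset r c d|%:R / (#|S| ^ r.*2.+1)%:R)%R.

(* delta(c,d): computed at a common radius of c and d (chosen by
   classical choice; the value is independent of the choice). *)
Definition common_radius (S : finType) (c d : config S -> config S) : nat :=
  epsilon (inhabits 0%N) (fun r => has_radius r c /\ has_radius r d).
Definition delta (S : finType) (c d : config S -> config S) : rat :=
  delta_at (common_radius c d) c d.

Definition perfect (S : finType) (X : (config S -> config S) -> Prop) : Prop :=
  forall c, X c -> forall eps : rat, (0 < eps)%R ->
    exists d, X d /\ d <> c /\ (delta c d < eps)%R.

(* Main.v *)
Require Import Defs.
From HB Require Import structures.
From mathcomp Require Import all_boot all_order all_algebra.
From mathcomp Require Import zify ring lra.
From Stdlib Require Import ClassicalEpsilon FunctionalExtensionality.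
Set Implicit Arguments. Unset Strict Implicit. Unset Printing Implicit Defensive.
Import Order.TTheory GRing.Theory Num.Theory.


Lemma card_bigcup_le (T : finType) n (E : 'I_n -> {set T}) :
  #|\bigcup_(k < n) E k| <= \sum_(k < n) #|E k|.
Proof.
apply: (big_ind2 (fun (A : {set T}) m => #|A| <= m)) => //; first by rewrite cards0.
move=> A1 m1 A2 m2 h1 h2; apply: leq_trans (leq_card_setU A1 A2) _; exact: leq_add.
Qed.

Lemma card_fix (S : finType) n (K : {set 'I_n}) (s : S) :
  #|[set w : {ffun 'I_n -> S} | [forall p in K, w p == s]]| = #|S| ^ (n - #|K|).
Proof.
pose F := fun p : 'I_n => if p \in K then pred1 s else predT.
have E : [set w : {ffun 'I_n -> S} | [forall p in K, w p == s]] =i family F.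
  move=> w; rewrite inE; apply/forall_inP/familyP => /= H p.
    rewrite /F; case: ifP => Hp; [exact: H | by []].
  move=> Hp; have := H p; by rewrite /F Hp.
rewrite (eq_card E) card_family foldrE big_map big_enum /=.
rewrite (eq_bigr (fun p => if p \notin K then #|S| else 1)); last first.
  by move=> p _; rewrite /F; case: ifP => _ /=; [rewrite card1 | rewrite cardT -cardE].
rewrite -big_mkcond /= prod_nat_const.
congr (_ ^ _).
have H := cardsC K; rewrite card_ord in H.
have E2 : #|(fun i : 'I_n => i \notin K)| = #|~: K| by apply: eq_card => p; rewrite inE.
rewrite E2; move: #|~: K| #|K| H => u v Huv; lia.
Qed.

Lemma bern (B n : nat) : (B ^ n * (B + n) <= (B.+1) ^ n * B)%N.
Proof.
elim: n => [|n IH]; first by rewrite !expn0 !mul1n addn0.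
rewrite !expnS.
have H1 : (B ^ n <= B.+1 ^ n)%N by case: (n) => [|n']; [rewrite !expn0 | rewrite leq_exp2r].
have E : (B * B ^ n * (B + n.+1) = B * (B ^ n * (B + n)) + B * B ^ n)%N by ring.
rewrite E.
apply: (@leq_trans (B * (B.+1 ^ n * B) + B * B.+1 ^ n)).
  apply: leq_add; [by rewrite leq_mul2l IH orbT | by rewrite leq_mul2l H1 orbT].
have E2 : (B * (B.+1 ^ n * B) + B * B.+1 ^ n = B.+1 * B.+1 ^ n * B)%N by ring.
by rewrite E2.
Qed.

Lemma final_arith (q L r : nat) : (1 < q)%N -> (0 < L)%N ->
  let K := ((q ^ L).-1 * q ^ r.*2)%N in
  (0 < K)%N /\ ((q ^ L).-1 ^ K < q ^ (K * L - r.*2))%N.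
Proof.
move=> Hq HL K.
have HA : (1 < q ^ L)%N.
  by rewrite -(expn0 q) ltn_exp2l.
set B := (q ^ L).-1.
have HB : (0 < B)%N by rewrite /B; lia.
have HQ : (0 < q ^ r.*2)%N by rewrite expn_gt0; lia.
have HK : (0 < K)%N by rewrite /K muln_gt0 HB HQ.
split => //.
have Hr : (r.*2 < q ^ r.*2)%N by apply: ltn_expl.
have HKr : (r.*2 <= K * L)%N.
  apply: leq_trans (ltnW Hr) _; rewrite /K (mulnC B) -mulnA; apply: leq_pmulr; by rewrite muln_gt0 HB HL.
have EA : (q ^ (K * L - r.*2) * q ^ r.*2 = (B.+1) ^ K)%N.
  rewrite -expnD subnK // /B prednK; last lia.
  by rewrite -expnM mulnC.
have Hb := bern B K.
have E1 : (B + K = B * (q ^ r.*2).+1)%N by rewrite /K /B; ring.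
rewrite E1 in Hb.
have E3 : (B ^ K * (B * (q ^ r.*2).+1) = B ^ K * (q ^ r.*2).+1 * B)%N by ring.
rewrite E3 leq_pmul2r // in Hb.
rewrite -(ltn_pmul2r HQ) EA.
apply: leq_trans Hb; rewrite ltn_mul2l expn_gt0 HB /=; lia.
Qed.

Section A.
Variable S : finType.
Local Open Scope ring_scope.
Implicit Types (x y : config S) (c d g : config S -> config S).

Lemma eqwP (rho : nat) x y i j :
  window rho x i = window rho y j <->
  (forall k : int, (`|k| <= rho)%N -> x (i + k) = y (j + k)).
Proof.
split.
- move=> /ffunP H k Hk.
  have Hn : (absz (k + rho%:Z)%R < rho.*2.+1)%N by lia.
  have := H (Ordinal Hn); rewrite !ffunE /=.
  have -> : (i - rho%:Z + (absz (k + rho%:Z)%R)%:Z) = i + k by lia.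
  have -> : (j - rho%:Z + (absz (k + rho%:Z)%R)%:Z) = j + k by lia.
  done.
- move=> H; apply/ffunP => k; rewrite !ffunE.
  have := H (k%:Z - rho%:Z); have := ltn_ord k.
  move=> Hk; have -> : i - rho%:Z + k%:Z = i + (k%:Z - rho%:Z) by lia.
  have -> : j - rho%:Z + k%:Z = j + (k%:Z - rho%:Z) by lia.
  apply; lia.
Qed.

Lemma extend_in (r : nat) (w : word S r) (j : int) : (`|j| <= r)%N ->
  extend w j = w (inord (absz (j + r%:Z)%R)).
Proof.
move=> H; rewrite /extend.
have -> : (0 <= j + r%:Z) && (j + r%:Z < (r.*2.+1)%:Z) by apply/andP; split; lia.
done.
Qed.

Lemma window_extend (r : nat) (w : word S r) : window r (extend w) 0 = w.
Proof.
apply/ffunP => k; rewrite ffunE extend_in; last by have := ltn_ord k; lia.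
congr (w _); apply/val_inj; have Hk := ltn_ord k; rewrite /= inordK; lia.
Qed.

Definition loc (rho : nat) c :=
  forall x y i j, window rho x i = window rho y j -> c x i = c y j.

Lemma loc_radius rho c : loc rho c <-> has_radius rho c.
Proof.
split.
- move=> H; exists (fun w => c (extend w) 0) => x i.
  apply: H; by rewrite window_extend.
- move=> [F HF] x y i j E; by rewrite !HF E.
Qed.

Lemma loc_mono rho rho' c : (rho <= rho')%N -> loc rho c -> loc rho' c.
Proof.
move=> Hr H x y i j /eqwP E; apply: H; apply/eqwP => k Hk; apply: E; lia.
Qed.

Lemma loc_comp r s c g : loc r c -> loc s g -> loc (r + s) (fun x => c (g x)).
Proof.
move=> Hc Hg x y i j /eqwP E; apply: Hc; apply/eqwP => k Hk.
apply: Hg; apply/eqwP => l Hl.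
rewrite -!addrA; apply: E; lia.
Qed.

Lemma local_ruleE r c (w : word S r) : local_rule c w = c (extend w) 0.
Proof. by []. Qed.


Definition restrict r (w : word S r.+1) : word S r := window r (extend w) 0.
Definition psi r (t : S * word S r * S) : word S r.+1 :=
  [ffun k : 'I_(r.+1.*2.+1) => if (k == 0 :> nat) then t.1.1
     else if (k == r.+1.*2 :> nat) then t.2 else t.1.2 (inord k.-1)].
Definition phi r (w : word S r.+1) : S * word S r * S := (w ord0, restrict w, w ord_max).

Lemma restrictE r (w : word S r.+1) (k : 'I_(r.*2.+1)) :
  restrict w k = w (inord k.+1).
Proof.
rewrite /restrict ffunE extend_in; last by have := ltn_ord k; lia.
congr (w _); apply/val_inj; have Hk := ltn_ord k; rewrite /= !inordK; lia.
Qed.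

Lemma phiK r : cancel (@phi r) (@psi r).
Proof.
move=> w; apply/ffunP => k; rewrite ffunE /=.
have Hk := ltn_ord k.
case: eqP => [E|E].
  by congr (w _); apply/val_inj.
case: eqP => [E'|E'].
  by congr (w _); apply/val_inj; rewrite /= E'.
rewrite restrictE; congr (w _); apply/val_inj; rewrite /= !inordK; lia.
Qed.

Lemma psiK r : cancel (@psi r) (@phi r).
Proof.
move=> [[a w] b]; rewrite /phi /= !ffunE /=.
have -> : (r.+1.*2 == r.+1.*2)%N by [].
congr (_, _, _).
apply/ffunP => k; rewrite restrictE ffunE /=.
have Hk := ltn_ord k.
rewrite inordK; last lia.
case: eqP => [E|E]; first lia.
case: eqP => [E'|E']; first lia.
congr (w _); apply/val_inj; rewrite /= inordK; lia.
Qed.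

Lemma Dset_step r c d : loc r c -> loc r d ->
  Dset r.+1 c d = (@phi r) @^-1: (setX (setX setT (Dset r c d)) setT).
Proof.
move=> Hc Hd; apply/setP => w; rewrite /Dset !inE /=.
have E : window r (extend w) 0 = window r (extend (restrict w)) 0
  by rewrite window_extend.
by rewrite andbT !local_ruleE (Hc _ _ _ _ E) (Hd _ _ _ _ E).
Qed.

Lemma card_Dset_step r c d : loc r c -> loc r d ->
  #|Dset r.+1 c d| = (#|S| * #|Dset r c d| * #|S|)%N.
Proof.
move=> Hc Hd; rewrite Dset_step // -(can2_imset_pre _ (@psiK r) (@phiK r)).
rewrite card_imset; last exact: can_inj (@psiK r).
by rewrite !cardsX !cardsT.
Qed.

Lemma delta_at_step r c d : (0 < #|S|)%N -> loc r c -> loc r d ->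
  delta_at r.+1 c d = delta_at r c d.
Proof.
move=> Hq Hc Hd; rewrite /delta_at card_Dset_step //.
have -> : (r.+1.*2.+1 = (r.*2.+1) + 2)%N by lia.
rewrite expnD !natrM.
have H1 : (#|S|%:R : rat) != 0 by rewrite pnatr_eq0 -lt0n.
have H2 : ((#|S| ^ r.*2.+1)%:R : rat) != 0 by rewrite pnatr_eq0 -lt0n expn_gt0 Hq.

by field; rewrite H1 H2.
Qed.


Lemma delta_at_shift r c d : (0 < #|S|)%N -> loc r c -> loc r d ->
  forall m, delta_at (r + m) c d = delta_at r c d.
Proof.
move=> Hq Hc Hd; elim=> [|m IH]; first by rewrite addn0.
rewrite addnS delta_at_step //; apply: loc_mono (_ : (r <= r + m)%N) _ => //; lia.
Qed.

Lemma delta_eq r c d : (0 < #|S|)%N -> loc r c -> loc r d ->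
  forall N, (r <= N)%N -> delta c d = delta_at N c d.
Proof.
move=> Hq Hc Hd N HN.
have [H1 H2] : has_radius (common_radius c d) c /\ has_radius (common_radius c d) d.
  apply: (epsilon_spec (inhabits 0%N) (fun r0 => has_radius r0 c /\ has_radius r0 d)); exists r; split; exact/loc_radius.
move/loc_radius: H1 => H1; move/loc_radius: H2 => H2.
rewrite /delta -(delta_at_shift Hq H1 H2 N) addnC.
apply: delta_at_shift => //; apply: loc_mono HN _ => //.
Qed.


Section Pattern.
Variables (a b : S) (R : nat).
Hypothesis ab : a != b.
Hypothesis R1 : (1 <= R)%N.

Definition Pb x (i : int) : bool :=
  (x (i - (R.+1)%:Z) == b) &&
  [forall k : 'I_R, (x (i - (k.+1)%:Z) == a) && (x (i + (k.+1)%:Z) == b)].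

Lemma PP x i : Pb x i <->
  (x (i - (R.+1)%:Z) = b /\
   forall k : int, 1 <= k -> k <= R%:Z -> x (i - k) = a /\ x (i + k) = b).
Proof.
split.
- move=> /andP [/eqP H1 /forallP H2]; split => // k Hk1 Hk2.
  have Hn : ((absz k).-1 < R)%N by lia.
  have := H2 (Ordinal Hn) => /andP [/eqP E1 /eqP E2].
  have Ek : ((Ordinal Hn : nat).+1)%:Z = k by rewrite /=; lia.
  by rewrite -Ek.
- move=> [H1 H2]; apply/andP; split; first by apply/eqP.
  apply/forallP => k; have Hk := ltn_ord k.
  have [E1 E2] := H2 ((k : nat).+1%:Z) ltac:(lia) ltac:(lia).
  by rewrite E1 E2 !eqxx.
Qed.

Lemma sep x i j : Pb x i -> Pb x j -> (`|j - i| <= R.+1)%N -> i = j.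
Proof.
move=> /PP [Hi1 Hi2] /PP [Hj1 Hj2] Hd.
case: (boolP (i == j)) => [/eqP //|Hne]; exfalso; move/eqP: Hne => Hne.
have Hab : a <> b by apply/eqP.
have [Hpos|Hneg] : (0 < j - i) \/ (j - i < 0) by lia.
- case: (boolP (j - i <= R%:Z)) => Ht.
  + (* position j - R - 1 : b for j, a for i *)
    have [E _] := Hi2 (R.+1%:Z - (j - i)) ltac:(lia) ltac:(lia).
    apply: Hab; rewrite -E -Hj1; congr x; lia.
  + (* j = i + R + 1 : position i+1 is b for i, position j - R = i + 1 is a for j *)
    have [_ E] := Hi2 1 ltac:(lia) ltac:(lia).
    have [E' _] := Hj2 R%:Z ltac:(lia) ltac:(lia).
    apply: Hab; rewrite -E -E'; congr x; lia.
- case: (boolP (- R%:Z <= j - i)) => Ht.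
  + have [E _] := Hj2 (R.+1%:Z + (j - i)) ltac:(lia) ltac:(lia).
    apply: Hab; rewrite -E -Hi1; congr x; lia.
  + have [_ E] := Hj2 1 ltac:(lia) ltac:(lia).
    have [E' _] := Hi2 R%:Z ltac:(lia) ltac:(lia).
    apply: Hab; rewrite -E -E'; congr x; lia.
Qed.

Lemma P_ext x y i j :
  (forall k : int, k != 0 -> (`|k| <= R.+1)%N -> x (i + k) = y (j + k)) ->
  Pb x i = Pb y j.
Proof.
move=> H.
have H' : forall x y i j,
  (forall k : int, k != 0 -> (`|k| <= R.+1)%N -> x (i + k) = y (j + k)) ->
  Pb x i -> Pb y j.
  move=> {H} x' y' i' j' H /PP [H1 H2]; apply/PP; split.
    rewrite -H1; symmetry; apply: H; lia.
  move=> k Hk1 Hk2; have [E1 E2] := H2 k Hk1 Hk2; split.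
    rewrite -E1; symmetry; apply: H; lia.
  rewrite -E2; symmetry; apply: H; lia.
apply/idP/idP; apply: H' => // k Hk Hk'; by rewrite H.
Qed.


Definition sw s := if s == a then b else if s == b then a else s.

Lemma swK s : sw (sw s) = s.
Proof.
have Hab : a <> b by apply/eqP.
rewrite /sw; repeat (case: eqP => /=; try congruence).
Qed.

Definition g x : config S := fun i => if Pb x i then sw (x i) else x i.

Lemma g_loc : loc R.+1 g.
Proof.
move=> x y i j /eqwP E; rewrite /g.
rewrite (@P_ext x y i j); last by move=> k _ Hk; apply: E.
have := E 0 isT; rewrite !addr0 => ->; done.
Qed.

Lemma g_agree x j k : Pb x j -> k != 0 -> (`|k| <= R.+1)%N -> g x (j + k) = x (j + k).
Proof.
move=> Hj Hk Hk'; rewrite /g; case: ifP => // Hjk.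
have := sep Hj Hjk; have -> : (j + k - j) = k by lia.
move=> /(_ Hk') E; exfalso; move/eqP: Hk; apply; lia.
Qed.

Lemma Pg1 x i : Pb x i -> Pb (g x) i.
Proof.
move=> H; rewrite (@P_ext (g x) x i i) // => k Hk Hk'; exact: g_agree.
Qed.

Lemma Pg x i : Pb (g x) i = Pb x i.
Proof.
case: (boolP (Pb x i)) => H; first exact: Pg1.
apply/negP => H'; move/negP: H; apply.
rewrite -(@P_ext (g x) x i i) // => k Hk Hk'.
rewrite {1}/g; case: ifP => // Hik.
have := sep H' (Pg1 Hik); have -> : (i + k - i) = k by lia.
move=> /(_ Hk') E; exfalso; move/eqP: Hk; apply; lia.
Qed.

Lemma gK x i : g (g x) i = x i.
Proof.
rewrite {1}/g Pg /g; case: (Pb x i) => //; exact: swK.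
Qed.


Definition x0 : config S := fun p => if p < 0 then (if p == - (R.+1)%:Z then b else a) else b.

Lemma Px0 : Pb x0 0.
Proof.
apply/PP; split.
  by rewrite /x0 sub0r ifT ?eqxx //; lia.
move=> k Hk1 Hk2; rewrite /x0 sub0r add0r; split.
  rewrite ifT; last lia. rewrite ifF //; apply/negbTE; lia.
rewrite ifF //; apply/negbTE; lia.
Qed.

Lemma gx0 : g x0 0 <> x0 0.
Proof.
rewrite /g Px0 /x0 ltxx /sw.
have Hab : a <> b by apply/eqP.
by repeat (case: eqP => /=; try congruence).
Qed.

Lemma comp_near r c : loc r c -> forall x i, c (g x) i <> c x i ->
  exists i', (`|i' - i| <= r)%N /\ Pb x i'.
Proof.
move=> Hc x i Hne.
case: (boolP [exists k : 'I_(r.*2.+1), Pb x (i - r%:Z + k%:Z)]).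
  move=> /existsP [k Hk]; exists (i - r%:Z + k%:Z); split => //.
  have := ltn_ord k; lia.
move=> Hn; exfalso; apply: Hne; apply: Hc; apply/eqwP => k Hk.
rewrite /g; case: ifP => // Hp; exfalso; move/negP: Hn; apply.
have Hn : (absz (k + r%:Z)%R < r.*2.+1)%N by lia.
apply/existsP; exists (Ordinal Hn) => /=.
have -> : i - r%:Z + (absz (k + r%:Z)%R)%:Z = i + k by lia.
done.
Qed.

Hypothesis Hq : (0 < #|S|)%N.

Lemma delta_bound rho r c d : loc rho c -> loc rho d ->
  (forall x, c x 0 <> d x 0 -> exists i', (`|i'| <= r)%N /\ Pb x i') ->
  delta c d * (#|S| ^ R)%:R <= (r.*2.+1)%:R.
Proof.
move=> Hc Hd Hcd.
set N := (rho + r + R.+1)%N.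
rewrite (@delta_eq rho c d Hq Hc Hd N); last by rewrite /N; lia.
pose K (k : 'I_(r.*2.+1)) := [set p : 'I_(N.*2.+1) |
   (1 <= p%:Z - N%:Z - (k%:Z - r%:Z)) && (p%:Z - N%:Z - (k%:Z - r%:Z) <= R%:Z)].
pose E k := [set w : word S N | [forall p in K k, w p == b]].
have Hsub : Dset N c d \subset \bigcup_(k < r.*2.+1) E k.
  apply/subsetP => w; rewrite inE !local_ruleE => /eqP /Hcd [i' [Hi' /PP [_ HP]]].
  have Hk : (absz (i' + r%:Z)%R < r.*2.+1)%N by lia.
  apply/bigcupP; exists (Ordinal Hk) => //; rewrite inE.
  apply/forall_inP => p; rewrite inE /= => /andP [Hp1 Hp2].
  have Hpos : 0 <= i' + r%:Z by lia.
  have [_ E1] := HP (p%:Z - N%:Z - i') ltac:(lia) ltac:(lia).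
  rewrite extend_in in E1; last by have := ltn_ord p; lia.
  apply/eqP; rewrite -E1; congr (w _); apply/val_inj; rewrite /= inordK; lia.
have HK : forall k, (R <= #|K k|)%N.
  move=> k.
  pose f (l : 'I_R) : 'I_(N.*2.+1) := inord (N - r + k + l).+1.
  have Hf : injective f.
    move=> l1 l2 /(congr1 val); rewrite /= !inordK.
    - move=> H; apply: ord_inj; lia.
    - have := ltn_ord k; have := ltn_ord l2; rewrite /N; lia.
    - have := ltn_ord k; have := ltn_ord l1; rewrite /N; lia.
  have -> : R = #|[set f l | l in [set: 'I_R]]| by rewrite card_imset // cardsT card_ord.
  apply: subset_leq_card; apply/subsetP => p /imsetP [l _ ->].
  have Hk' := ltn_ord k; have Hl := ltn_ord l.
  rewrite /K inE /f /= inordK; last by rewrite /N; lia.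
  apply/andP; split; rewrite /N; lia.
have HE : forall k, (#|E k| <= #|S| ^ (N.*2.+1 - R))%N.
  move=> k; rewrite /E card_fix; apply: leq_pexp2l => //; apply: leq_sub2l; exact: HK.
have HD : (#|Dset N c d| <= r.*2.+1 * #|S| ^ (N.*2.+1 - R))%N.
  apply: leq_trans (subset_leq_card Hsub) _.
  apply: leq_trans (card_bigcup_le _) _.
  apply: (@leq_trans (\sum_(k < r.*2.+1) #|S| ^ (N.*2.+1 - R))); first by apply: leq_sum => k _; exact: HE.
  by rewrite sum_nat_const card_ord.
rewrite /delta_at mulrAC ler_pdivrMr; last by rewrite ltr0n expn_gt0 Hq.
rewrite -!natrM ler_nat.
apply: leq_trans (leq_mul HD (leqnn _)) _.
rewrite -mulnA -expnD subnK //; rewrite /N; lia.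
Qed.


Lemma c_ext r c x y i : loc r c -> (forall p, x p = y p) -> c x i = c y i.
Proof. move=> Hc H; apply: Hc; apply/eqwP => k _; exact: H. Qed.

Definition flip (i : int) x : config S := fun p => if p == i then sw (x p) else x p.

Lemma flip_lemma r c : loc r c -> (r.*2 <= R.+1)%N ->
  (forall x j, c (g x) j = c x j) ->
  forall x i, Pb x i -> forall j, c (flip i x) j = c x j.
Proof.
move=> Hc HR Hg x i Hi j.
have Hab : a <> b by apply/eqP.
case: (boolP (`|j - i| <= r)%N) => Hji; last first.
  apply: Hc; apply/eqwP => k Hk; rewrite /flip ifF //; apply/negbTE; lia.
pose y : config S := fun p => if (`|p - i| <= R.+1)%N then x p else a.
have Hyi : Pb y i.
  rewrite (@P_ext y x i i) // => k _ Hk; rewrite /y ifT //; lia.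
have Hgy : forall p, g y p = flip i y p.
  move=> p; rewrite /g /flip; case: eqP => [->|Hpi]; first by rewrite Hyi.
  case: ifP => // Hyp; exfalso.
  case: (boolP (`|p - i| <= R.+1)%N) => Hd.
    by apply: Hpi; apply: (sep Hyp Hyi); lia.
  move/PP: Hyp => [H1 H2].
  case: (boolP (i < p)) => Hip.
    have [_ E] := H2 1 ltac:(lia) ltac:(lia).
    apply: Hab; rewrite -E /y ifF //; apply/negbTE; lia.
  apply: Hab; rewrite -H1 /y ifF //; apply/negbTE; lia.
have E1 : c (flip i x) j = c (flip i y) j.
  apply: Hc; apply/eqwP => k Hk; rewrite /flip /y [X in _ = if _ then sw X else X]ifT //; lia.
have E2 : c x j = c y j.
  apply: Hc; apply/eqwP => k Hk; rewrite /y ifT //; lia.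
rewrite E1 E2 -(Hg y j); apply: c_ext Hc _ => p; by rewrite Hgy.
Qed.


Section GoE.
Variables (r : nat) (c : config S -> config S).
Hypothesis Hc : loc r c.
Hypothesis HR : (r.*2 <= R.+1)%N.
Hypothesis Hg : forall x j, c (g x) j = c x j.
Hypothesis Hsurj : forall y, exists x, c x = y.

Let L := R.*2.+2.
Definition pb : {ffun 'I_L -> S} :=
  [ffun s : 'I_L => if (s == 0 :> nat) then b else if (s <= R)%N then a else b].
Definition pa : {ffun 'I_L -> S} := [ffun s : 'I_L => if (s == R.+1 :> nat) then a else pb s].

Definition conf k (u : {ffun 'I_k.+1 -> {ffun 'I_L -> S}}) : config S := fun p =>
  if (0 <= p) && (p < (k.+1 * L)%N%:Z) then u (inord (absz p %/ L)) (inord (absz p %% L)) else a.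

Lemma blk k (t : 'I_k) (s : 'I_L) : ((t * L + s) %/ L = t /\ (t * L + s) %% L = s)%N.
Proof.
split; first by rewrite divnMDl // divn_small ?addn0.
by rewrite modnMDl modn_small.
Qed.

Lemma tL_bound k (t : 'I_k) : (t * L + L <= k * L)%N.
Proof. rewrite addnC -mulSn leq_mul2r; by have := ltn_ord t; rewrite orbC => ->. Qed.

Lemma conf_blk k u (t : 'I_k.+1) (s : 'I_L) : conf u ((t * L + s)%N%:Z) = u t s.
Proof.
have Hs := ltn_ord s; have Ht := tL_bound t.
rewrite /conf ifT; last by apply/andP; split; lia.
have [E1 E2] := blk t s.
rewrite absz_nat E1 E2; congr (u _ _); apply/val_inj; rewrite /= inordK //.
Qed.


Lemma conf_dec k (p : int) : 0 <= p -> p < (k.+1 * L)%N%:Z ->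
  exists (t : 'I_k.+1) (s : 'I_L), p = (t * L + s)%N%:Z.
Proof.
move=> H1 H2.
have HP : (absz p < k.+1 * L)%N by lia.
have Ht : (absz p %/ L < k.+1)%N by rewrite ltn_divLR.
have Hs : (absz p %% L < L)%N by rewrite ltn_pmod.
exists (Ordinal Ht), (Ordinal Hs) => /=.
by rewrite -divn_eq; lia.
Qed.

Lemma conf_out k (u : {ffun 'I_k.+1 -> {ffun 'I_L -> S}}) (p : int) : ~~ ((0 <= p) && (p < (k.+1 * L)%N%:Z)) -> conf u p = a.
Proof. by move=> H; rewrite /conf (negbTE H). Qed.

Definition upd k (n : nat) (v : {ffun 'I_k.+1 -> {ffun 'I_L -> S}}) :=
  [ffun t : 'I_k.+1 => if ((t == n :> nat) && (v t == pb)) then pa else v t].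

Lemma Pconf k (v : {ffun 'I_k.+1 -> {ffun 'I_L -> S}}) (t : 'I_k.+1) : v t = pb -> Pb (conf v) ((t * L + R.+1)%N%:Z).
Proof.
move=> Hv; have Ht := tL_bound t.
have HRL : (R.+1 < L)%N by rewrite /L; lia.
apply/PP; split.
  have -> : (t * L + R.+1)%N%:Z - R.+1%:Z = (t * L + (ord0 : 'I_L))%N%:Z by rewrite /=; lia.
  by rewrite conf_blk Hv ffunE.
move=> j Hj1 Hj2; split.
  have Hs : (R.+1 - absz j < L)%N by lia.
  have -> : (t * L + R.+1)%N%:Z - j = (t * L + (Ordinal Hs : 'I_L))%N%:Z by rewrite /=; lia.
  rewrite conf_blk Hv ffunE /= ifF; last by apply/negbTE; lia.
  by rewrite ifT //; lia.
have Hs : (R.+1 + absz j < L)%N by rewrite /L; lia.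
have -> : (t * L + R.+1)%N%:Z + j = (t * L + (Ordinal Hs : 'I_L))%N%:Z by rewrite /=; lia.
rewrite conf_blk Hv ffunE /= ifF; last by apply/negbTE; lia.
by [].
Qed.

Definition Phi k (u : {ffun 'I_k.+1 -> {ffun 'I_L -> S}}) : {ffun 'I_(k.+1 * L - r.*2) -> S} :=
  [ffun j : 'I_(k.+1 * L - r.*2) => c (conf u) ((j : nat)%:Z + r%:Z)].

Lemma Phi_upd k n v : Phi (@upd k n v) = Phi v.
Proof.
case: (boolP [exists t : 'I_k.+1, (t == n :> nat) && (v t == pb)]); last first.
  move=> Hn; congr Phi; apply/ffunP => t; rewrite ffunE ifF //.
  apply/negbTE; move: Hn; apply: contra => Ht; apply/existsP; by exists t.
move=> /existsP [t /andP [/eqP Htn /eqP Hvt]].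
have HP := Pconf Hvt.
have E : forall p, conf (upd n v) p = flip ((t * L + R.+1)%N%:Z) (conf v) p.
  move=> p; rewrite /flip.
  have Ht := tL_bound t.
  have HRL : (R.+1 < L)%N by rewrite /L; lia.
  case: (boolP ((0 <= p) && (p < (k.+1 * L)%N%:Z))) => Hp; last first.
    rewrite !conf_out // ifF //; apply/negbTE; move: Hp; apply: contra => /eqP ->.
    apply/andP; split; lia.
  move/andP: Hp => [Hp1 Hp2]; have [t' [s' ->]] := conf_dec Hp1 Hp2.
  rewrite !conf_blk ffunE.
  case: (eqVneq t' t) => [->|Htt].
    rewrite Htn eqxx Hvt eqxx /= ffunE.
    case: (eqVneq (s' : nat) R.+1) => [Hs|Hs].
      case: eqP => [_|H]; last by exfalso; apply: H; lia.
      rewrite ffunE /= ifF; last by apply/negbTE; lia.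
      rewrite ifF; last by apply/negbTE; lia.
      have Hab : a <> b by apply/eqP.
      by rewrite /sw; repeat (case: eqP => /=; try congruence).
    case: eqP => [H|_] //; exfalso; apply/eqP: Hs; lia.
  have Hne : (t' : nat) != n by rewrite -Htn; apply: contra Htt => /eqP H; apply/eqP/val_inj.
  rewrite (negbTE Hne) /= ifF; last first.
    apply/negbTE; apply/negP => /eqP H.
    have H' : (t' * L + s' = t * L + R.+1)%N by lia.
    have [E1 _] := blk t' s'.
    have : ((t * L + R.+1) %/ L = t)%N by rewrite divnMDl // divn_small ?addn0.
    rewrite -H' E1 => H2; move/eqP: Htt; apply; exact/val_inj.
  by [].
apply/ffunP => j; rewrite !ffunE.
rewrite (@c_ext r c _ (flip ((t * L + R.+1)%N%:Z) (conf v))) //.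
exact: (flip_lemma Hc HR Hg HP).
Qed.


Definition rhoN k (n : nat) (u : {ffun 'I_k.+1 -> {ffun 'I_L -> S}}) :=
  [ffun t : 'I_k.+1 => if ((t < n)%N && (u t == pb)) then pa else u t].

Lemma rho_step k n u : @rhoN k n.+1 u = upd n (rhoN n u).
Proof.
apply/ffunP => t; rewrite !ffunE.
case: (ltngtP t n) => H /=.
- have -> : (t < n.+1)%N by lia.
  by [].
- have -> : (t < n.+1)%N = false by apply/negbTE; lia.
  by [].
- by rewrite H ltnSn.
Qed.

Lemma Phi_rho k n u : Phi (@rhoN k n u) = Phi u.
Proof.
elim: n => [|n IH].
  by congr Phi; apply/ffunP => t; rewrite ffunE.
by rewrite rho_step Phi_upd.
Qed.

Lemma rho_avoid k u t : @rhoN k k.+1 u t != pb.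
Proof.
rewrite ffunE ltn_ord /=; case: (eqVneq (u t) pb) => [_|//].
apply/negP => /eqP E; have := congr1 (fun f : {ffun 'I_L -> S} => f (inord R.+1)) E; rewrite !ffunE /= inordK; last by rewrite /L; lia.
rewrite eqxx ifF; last by apply/negbTE; lia.
by move/eqP; rewrite (negbTE ab).
Qed.

Lemma Phi_surj k v : exists u, @Phi k u = v.
Proof.
pose y : config S := fun p => if 0 <= p - r%:Z
  then odflt a (omap v (insub (absz (p - r%:Z)%R))) else a.
have [x Hx] := Hsurj y.
exists [ffun t : 'I_k.+1 => [ffun s : 'I_L => x ((t * L + s)%N%:Z)]].
apply/ffunP => j; rewrite ffunE.
have Hj := ltn_ord j.
transitivity (c x ((j : nat)%:Z + r%:Z)).
  apply: Hc; apply/eqwP => l Hl.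
  have H1 : 0 <= (j : nat)%:Z + r%:Z + l by lia.
  have H2 : (j : nat)%:Z + r%:Z + l < (k.+1 * L)%N%:Z by lia.
  have [t [s E]] := conf_dec H1 H2.
  by rewrite E conf_blk !ffunE.
rewrite Hx /y ifT; last lia.
have -> : absz ((j : nat)%:Z + r%:Z - r%:Z)%R = j by lia.
by rewrite valK.
Qed.

Lemma count_bound k :
  (#|S| ^ (k.+1 * L - r.*2) <= (#|S| ^ L).-1 ^ k.+1)%N.
Proof.
have H1 : #|{ffun 'I_(k.+1 * L - r.*2) -> S}| = (#|S| ^ (k.+1 * L - r.*2))%N
  by rewrite card_ffun card_ord.
rewrite -H1.
apply: (@leq_trans #|[set Phi (@rhoN k k.+1 u) | u in [set: {ffun 'I_k.+1 -> {ffun 'I_L -> S}}]]|).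
  apply: subset_leq_card; apply/subsetP => v _.
  have [u Hu] := Phi_surj v.
  apply/imsetP; exists u; first by rewrite inE.
  by rewrite Phi_rho.
rewrite (imset_comp (@Phi k) (@rhoN k k.+1)).
apply: leq_trans (leq_imset_card _ _) _.
apply: (@leq_trans #|family (fun _ : 'I_k.+1 => predC1 pb)|).
  apply: subset_leq_card; apply/subsetP => w /imsetP [u _ ->].
  apply/familyP => t; exact: rho_avoid.
rewrite card_family foldrE big_map big_enum /=.
rewrite (eq_bigr (fun _ => (#|S| ^ L).-1)); last by move=> t _; rewrite cardC1 card_ffun card_ord.
by rewrite prod_nat_const card_ord.
Qed.

Lemma goe : (1 < #|S|)%N -> False.
Proof.
move=> H2.
have [HK Hlt] := @final_arith #|S| L r H2 isT.
set K := ((#|S| ^ L).-1 * #|S| ^ r.*2)%N in HK Hlt.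
have := count_bound K.-1; rewrite prednK //.
by rewrite leqNgt Hlt.
Qed.

End GoE.

End Pattern.

End A.

Lemma choose_R (S : finType) (hS : (1 < #|S|)%N) (r : nat) (eps : rat) : (0 < eps)%R ->
  exists R, [/\ (0 < R)%N, (r.*2 <= R.+1)%N &
    ((r.*2.+1)%:R < eps * (#|S| ^ R)%:R)%R].
Proof.
move=> He.
set M := Num.Def.archi_bound ((r.*2.+1)%:R / eps : rat).
have HM : ((r.*2.+1)%:R / eps < M%:R :> rat)%R.
  apply: archi_boundP; apply: divr_ge0 => //; exact: ltW.
exists (M + r.*2).+1; split => //; first lia.
have H1 : (M < #|S| ^ (M + r.*2).+1)%N.
  apply: leq_trans (ltn_expl _ hS); lia.
rewrite mulrC -ltr_pdivrMr //.
apply: lt_trans HM _; rewrite ltr_nat //.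
Qed.

Lemma delta_lt (S : finType) (c d : config S -> config S) (Q : nat) (r : nat) (eps : rat) :
  (0 < Q)%N -> (delta c d * Q%:R <= (r.*2.+1)%:R)%R ->
  ((r.*2.+1)%:R < eps * Q%:R)%R -> (delta c d < eps)%R.
Proof.
move=> HQ H1 H2; rewrite -(ltr_pM2r (_ : (0 < Q%:R :> rat))%R); last by rewrite ltr0n.
exact: le_lt_trans H1 H2.
Qed.

Theorem mainTheorem7 (S : finType) (hS : 1 < #|S|) :
  perfect (@isCA S) /\ perfect (@isSUR S) /\ perfect (@isREV S).
Proof.
have [a [b [_ _ ab]]] := card_gt1P hS.
have Hq : (0 < #|S|)%N by apply: ltnW.
have Hab : a <> b by apply/eqP.
split; [|split].
- move=> c [r /loc_radius Hc] eps He.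
  have [R [R1 HR Hlt]] := choose_R hS r He.
  pose sw2 (s : S) := if s == b then a else b.
  pose d := fun x (i : int) => if Pb a b R x i then sw2 (c x i) else c x i.
  have Hc' : loc (r + R.+1) c by apply: loc_mono Hc; lia.
  have Hd : loc (r + R.+1) d.
    move=> x y i j E; rewrite /d (Hc' _ _ _ _ E).
    move/eqwP: E => E.
    rewrite (@P_ext S a b R ab R1 x y i j) // => k _ Hk; apply: E; lia.
  exists d; split; [|split].
  + exists (r + R.+1); exact/loc_radius.
  + move=> E; have := congr1 (fun f => f (x0 a b R) 0%R) E.
    rewrite /d Px0 // /sw2; case: eqP => [->|H]; [exact: Hab | by move=> /esym].
  + have HQ : (0 < #|S| ^ R)%N by rewrite expn_gt0 Hq.
    apply: (@delta_lt _ c d _ r eps HQ _ Hlt).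
    apply: (delta_bound ab R1 Hq Hc' Hd) => x Hx; exists 0%R; split => //.
    apply/negPn/negP => Hn; apply: Hx; by rewrite /d (negbTE Hn).
- move=> c [[r /loc_radius Hc] Hs] eps He.
  have [R [R1 HR Hlt]] := choose_R hS r He.
  pose d := fun x => c (g a b R x).
  have Hc' : loc (r + R.+1) c by apply: loc_mono Hc; lia.
  have Hd : loc (r + R.+1) d by apply: loc_comp Hc (g_loc ab R1).
  have Hgg : forall x, g a b R (g a b R x) = x.
    move=> x; apply: functional_extensionality => i; exact: gK.
  have HQ : (0 < #|S| ^ R)%N by rewrite expn_gt0 Hq.
  have Hdel : (delta c d < eps)%R.
    apply: (@delta_lt _ c d _ r eps HQ _ Hlt).
    apply: (delta_bound ab R1 Hq Hc' Hd) => x Hx.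
    have [i' [Hi' HP]] := comp_near ab R1 Hc (fun E => Hx (esym E)).
    exists i'; split => //; move: Hi'; by rewrite subr0.
  exists d; split; last split => //.

  + split; first by exists (r + R.+1); exact/loc_radius.
    move=> y; have [x Hx] := Hs y; exists (g a b R x); by rewrite /d Hgg.
  + move=> E; apply: (goe ab R1 Hq Hc _ _ Hs hS).
      lia.
    move=> x j; exact: (congr1 (fun f => f x j) E).
- move=> c [[r /loc_radius Hc] Hi] eps He.
  have [R [R1 HR Hlt]] := choose_R hS r He.
  pose d := fun x => c (g a b R x).
  have Hc' : loc (r + R.+1) c by apply: loc_mono Hc; lia.
  have Hd : loc (r + R.+1) d by apply: loc_comp Hc (g_loc ab R1).
  have Hgg : forall x, g a b R (g a b R x) = x.
    move=> x; apply: functional_extensionality => i; exact: gK.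
  have HQ : (0 < #|S| ^ R)%N by rewrite expn_gt0 Hq.
  have Hdel : (delta c d < eps)%R.
    apply: (@delta_lt _ c d _ r eps HQ _ Hlt).
    apply: (delta_bound ab R1 Hq Hc' Hd) => x Hx.
    have [i' [Hi' HP]] := comp_near ab R1 Hc (fun E => Hx (esym E)).
    exists i'; split => //; move: Hi'; by rewrite subr0.
  exists d; split; last split => //.

  + split; first by exists (r + R.+1); exact/loc_radius.
    move=> x y /Hi E; by rewrite -(Hgg x) -(Hgg y) E.
  + move=> E; apply: (gx0 ab R1).
    by rewrite (Hi _ _ (congr1 (fun f => f (x0 a b R)) E)).
Qed.
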